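(* For every standard allocation rule $f$, every instance and every seller $i\in S$, we have $r^\star\ge r_i$, where $r^\star$ is the stopping rate of $\mathrm{EnvyFree}(f)$ on the cost vector $c$ and $r_i$ is the stopping rate of $\mathrm{EnvyFree}(f)$ on the cost vector obtained from $c$ by replacing $c_i$ with $0$.
   Context: Setting: a buyer with budget $B>0$ faces a finite set $S$ of sellers; seller $i$ owns one divisible item giving utility $u_i>0$ and has cost $c_i\ge0$. A standard allocation rule is a non-increasing $f:[0,\infty)\to[0,1]$ with $f(0)=1$, $f(e-1)=0$. For $r>0$: $f_r(x)=f(x/r)$, $Q_r(x)=xf_r(x)+\int_x^\infty f_r(y)\,dy$, $P_{i,r}(x)=u_iQ_r(x/u_i)$. The stopping rate of $\mathrm{EnvyFree}(f)$ on a cost vector $c'$ is the value at which, decreasing $r$ from $\infty$, the nondecreasing function $r\mapsto\sum_iP_{i,r}(c'_i)$ first equals $B$. *)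

(* Defs.v *)
From HB Require Import structures.
From mathcomp Require Import all_boot all_order all_algebra.
From mathcomp Require Import all_classical all_reals all_analysis.
Set Implicit Arguments. Unset Strict Implicit. Unset Printing Implicit Defensive.
Import Order.TTheory GRing.Theory Num.Theory.
Local Open Scope classical_set_scope.
Local Open Scope ring_scope.

Section Defs.
Context {R : realType}.

(* A standard allocation rule f : [0,oo) -> [0,1], non-increasing,
   f(0) = 1 and f(e-1) = 0.  Values of f outside [0,oo) are irrelevant. *)
Definition standard_alloc (f : R -> R) : Prop :=
  [/\ (forall x y, 0 <= x -> x <= y -> f y <= f x),
      (forall x, 0 <= x -> 0 <= f x <= 1),
      f 0 = 1 &
      f (expR 1 - 1) = 0].

Definition f_r (f : R -> R) (r x : R) : R := f (x / r).

Definition Q_r (f : R -> R) (r x : R) : \bar R :=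
  ((x * f_r f r x)%:E +
   \int[@lebesgue_measure R]_(y in `[x, +oo[%classic) (f_r f r y)%:E)%E.

Definition P_r (f : R -> R) (ui r x : R) : \bar R :=
  (ui%:E * Q_r f r (x / ui))%E.

Definition total_P (S : finType) (f : R -> R) (u c' : S -> R) (r : R) : \bar R :=
  (\sum_(i : S) P_r f (u i) r (c' i))%E.

(* r is the stopping rate of EnvyFree(f) on cost vector c': decreasing r from
   oo, r is the first value at which total_P equals B. *)
Definition is_stopping_rate (S : finType) (f : R -> R) (u c' : S -> R)
    (B r : R) : Prop :=
  0 < r /\ total_P f u c' r = B%:E /\
  (forall r', r < r' -> total_P f u c' r' <> B%:E).

Definition zero_at (S : finType) (c : S -> R) (i : S) : S -> R :=
  fun j => if j == i then 0 else c j.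

End Defs.

(* Main.v *)
Require Import Defs.
From HB Require Import structures.
From mathcomp Require Import all_boot all_order all_algebra.
From mathcomp Require Import all_classical all_reals all_analysis measurable_realfun.
Import Order.TTheory GRing.Theory Num.Theory.
Local Open Scope ring_scope.
Local Open Scope classical_set_scope.

Section H.
Context {R : realType}.
Implicit Types f : R -> R.

Lemma fr_meas f (r x : R) : standard_alloc f -> 0 < r -> 0 <= x ->
  measurable_fun `[x, +oo[ (fun y => (f_r f r y)%:E).
Proof.
move=> [fni _ _ _] r0 x0; apply/(measurable_EFinP _ (f_r f r)).
have H1 : {in `[x, +oo[, (fun y => f (Num.max 0 y / r)) =1 f_r f r}.
  move=> y; rewrite inE /= in_itv /= andbT => xy.
  by rewrite /f_r max_r // (le_trans x0 xy).
have H2 : measurable_fun `[x, +oo[ (fun y => f (Num.max 0 y / r)).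
  apply: nonincreasing_measurable => // s t st.
  apply: fni; first by rewrite divr_ge0 // ?le_max ?lexx // ltW.
  by rewrite ler_pM2r ?invr_gt0 // ge_max !le_max lexx st !orbT.
exact: (eq_measurable_fun _ H1 H2).
Qed.

Lemma fr_ge0 f r y : standard_alloc f -> 0 < r -> 0 <= y -> 0 <= f_r f r y.
Proof. by move=> [_ f01 _ _] r0 y0; case/andP: (f01 _ (divr_ge0 y0 (ltW r0))). Qed.

Lemma Q_mono_r f (r1 r2 x : R) : standard_alloc f -> 0 < r1 -> r1 <= r2 -> 0 <= x ->
  (Q_r f r1 x <= Q_r f r2 x)%E.
Proof.
move=> sf r10 r12 x0; have r20 := lt_le_trans r10 r12.
have mono y : 0 <= y -> f_r f r1 y <= f_r f r2 y.
  move=> y0; case: sf => fni _ _ _; apply: fni; first by rewrite divr_ge0 // ltW.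
  by rewrite ler_wpM2l // lef_pV2 ?posrE.
rewrite /Q_r; apply: (@leeD R).
  by rewrite lee_fin ler_wpM2l // mono.
apply: ge0_le_integral => //.
- by move=> y; rewrite /= in_itv /= andbT => xy; rewrite lee_fin fr_ge0 // (le_trans x0).
- exact: fr_meas.
- exact: fr_meas.
- by move=> y; rewrite /= in_itv /= andbT => xy; rewrite lee_fin mono // (le_trans x0).
Qed.

Lemma Q_mono_x f (r x : R) : standard_alloc f -> 0 < r -> 0 <= x ->
  (Q_r f r x <= Q_r f r 0)%E.
Proof.
move=> sf r0 x0; rewrite /Q_r mul0r add0e.
have -> : `[0, +oo[%classic = `[0, x[%classic `|` `[x, +oo[%classic :> set R.
  by rewrite -itv_bndbnd_setU // bnd_simp.
rewrite ge0_integral_setU //.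
- apply: leeD2r.
  have -> : ((x * f_r f r x)%:E = \int[lebesgue_measure]_(y in `[0%R, x[) (cst (f_r f r x)%:E) y)%E.
    have L : lebesgue_measure (`[0%R, x[ : set R) = x%:E.
      rewrite lebesgue_measure_itv /= lte_fin.
      by case: ltgtP x0 => // [x0' _|<- _]; rewrite ?sube0 // -EFinB subr0.
    rewrite integral_cst //; transitivity ((f_r f r x)%:E * x%:E)%E.
      by rewrite -EFinM mulrC.
    by congr (_ * _)%E; exact: esym L.
  apply: ge0_le_integral => //.
  + by move=> y _; rewrite lee_fin fr_ge0.
  + apply: measurable_funS (@fr_meas f r 0 sf r0 (lexx 0)) => //.
    by move=> y /=; rewrite !in_itv /= => /andP[-> _].
  + move=> y /=; rewrite in_itv /= => /andP[y0 yx]; rewrite lee_fin.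
    case: sf => fni _ _ _; apply: fni; first by rewrite divr_ge0 // ltW.
    by rewrite ler_pM2r ?invr_gt0 // ltW.
- rewrite -itv_bndbnd_setU ?bnd_simp //; exact: (@fr_meas f r 0 sf r0 (lexx 0)).
- move=> y; rewrite -itv_bndbnd_setU ?bnd_simp //= in_itv /= andbT => y0.
  by rewrite lee_fin fr_ge0.
- by apply: lt_disjoint => a b; rewrite !in_itv /= andbT => /andP[_ ax] xb; exact: lt_le_trans ax xb.
Qed.
End H.

Theorem lemma1 (R : realType) (S : finType) (f : R -> R) (B : R)
    (u c : S -> R) (i : S) (rstar ri : R) :
  standard_alloc f ->
  0 < B ->
  (forall j, 0 < u j) ->
  (forall j, 0 <= c j) ->
  is_stopping_rate f u c B rstar ->
  is_stopping_rate f u (zero_at c i) B ri ->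
  ri <= rstar.
Proof.
move=> sf B0 u0 c0 [rs0 [Hs Hsr]] [ri0 [Hi Hir]].
rewrite leNgt; apply/negP => lt; apply: (Hsr ri lt).
have x0 j : 0 <= c j / u j by rewrite divr_ge0 // ltW.
apply: le_anti; apply/andP; split.
- rewrite -Hi /total_P; apply: lee_sum => j _; rewrite /P_r /zero_at.
  case: eqP => _ //; rewrite mul0r.
  by apply: lee_wpmul2l; [rewrite lee_fin ltW | exact: Q_mono_x].
- rewrite -Hs /total_P; apply: lee_sum => j _; rewrite /P_r.
  by apply: lee_wpmul2l; [rewrite lee_fin ltW | apply: Q_mono_r => //; exact: ltW].
Qed.
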